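(* Let $G$ be a trigraph containing a fence gadget $F$ (with sides $A$, $B$) attached to a set $S$. Consider any partial contraction sequence from $G$, and the first contraction in it that involves two vertices of $V(F)$ (i.e., merges a part containing a vertex of $V(F)$ with another part containing a vertex of $V(F)$). Unless this contraction involves a pair $(a_i,b_j)$ with $a_i\in A$ and $b_j\in B$, the vertex created by it has red degree at least $5$.
   Context: A trigraph $G$ consists of a vertex set $V(G)$ and two disjoint sets of unordered pairs of distinct vertices: black edges and red edges. Contracting two distinct vertices $u,v$ replaces them by a new vertex $w$ such that, for every other vertex $z$, $wz$ is black if $uz,vz$ are both black, a non-edge if both are non-edges, and red otherwise. In a partial contraction sequence from $G$, each vertex $u$ of a later trigraph corresponds to the set $u(G)$ (its part) of vertices of $G$ merged into it; a contraction of $u,u'$ involves a vertex $v$ of $G$ if $v\in u(G)\cup u'(G)$, and involves a pair $v,v'$ if $v\in u(G),v'\in u'(G)$ or vice versa. A fence gadget is a trigraph $F$ on $A\cup B$, $A=\{a_1,\dots,a_6\}$, $B=\{b_1,\dots,b_6\}$, whose black edges are those of the cycles $a_1a_2a_3a_4a_5a_6a_1$ and $b_1b_2b_3b_4b_5b_6b_1$ together with $b_1a_6$, and whose red edges are $a_ib_i$ for $i\in[6]$ and $a_ib_{i+1}$ for $i\in[5]$. Inside a trigraph $G$, a fence gadget $F$ is attached to a nonempty set $S\subseteq V(G)\setminus V(F)$ if every vertex of $A$ is joined by a black edge to every vertex of $S$ and no vertex of $B$ is adjacent to a vertex of $S$. *)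

(* Defs.v *)
From mathcomp Require Import all_boot.
Set Implicit Arguments. Unset Strict Implicit. Unset Printing Implicit Defensive.

(* A trigraph on the finite vertex type V (all elements of V are vertices) is
   given by two relations black, red; well-formedness is a hypothesis. *)
Definition trigraph_wf (V : finType) (black red : rel V) : Prop :=
  [/\ symmetric black, symmetric red, irreflexive black, irreflexive red
    & forall x y, ~~ (black x y && red x y)].

(* A stage of a partial contraction sequence: each vertex is named by its
   part u(G) (a set of original vertices). *)
Record stage (V : finType) := Stage {
  parts : {set {set V}};
  sblack : rel {set V};
  sred : rel {set V} }.

Definition snon (V : finType) (s : stage V) (x y : {set V}) : bool :=
  ~~ sblack s x y && ~~ sred s x y.

Definition init_stage (V : finType) (black red : rel V) : stage V :=
  Stage [set [set v] | v : V]
    (fun P Q => [exists u, exists v, [&& P == [set u], Q == [set v] & black u v]])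
    (fun P Q => [exists u, exists v, [&& P == [set u], Q == [set v] & red u v]]).

Definition contract (V : finType) (s : stage V) (u v : {set V}) : stage V :=
  let w := u :|: v in
  let nb z := sblack s u z && sblack s v z in
  let nn z := snon s u z && snon s v z in
  let nr z := ~~ nb z && ~~ nn z in
  Stage (w |: ((parts s :\ u) :\ v))
    (fun x y => if x == w then (y != w) && nb y
                else if y == w then nb x else sblack s x y)
    (fun x y => if x == w then (y != w) && nr y
                else if y == w then nr x else sred s x y).

Definition run (V : finType) (s : stage V) (steps : seq ({set V} * {set V})) : stage V :=
  foldl (fun s p => contract s p.1 p.2) s steps.

Fixpoint valid_seq (V : finType) (s : stage V) (steps : seq ({set V} * {set V})) : bool :=
  match steps with
  | [::] => true
  | p :: t => [&& p.1 \in parts s, p.2 \in parts s, p.1 != p.2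
              & valid_seq (contract s p.1 p.2) t]
  end.

Definition red_degree (V : finType) (s : stage V) (x : {set V}) : nat :=
  #|[set y in parts s | sred s x y]|.

(* Fence gadget, indices 0..5 standing for 1..6. *)
Definition cyc6 (i j : nat) : bool := (j == i.+1 %% 6) || (i == j.+1 %% 6).

Definition fence_gadget (V : finType) (black red : rel V) (a b : 'I_6 -> V) : Prop :=
  [/\ injective a, injective b, (forall i j, a i != b j)
    & (forall i j, black (a i) (a j) = cyc6 i j)] /\
  [/\ 
      (forall i j, black (b i) (b j) = cyc6 i j),
      (forall i j, black (a i) (b j) = (i == 5 :> nat) && (j == 0 :> nat)),
      (forall i j, red (a i) (a j) = false),
      (forall i j, red (b i) (b j) = false)
    & (forall i j, red (a i) (b j) = (i == j :> nat) || (j == i.+1 :> nat))].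

Definition fence_vertices (V : finType) (a b : 'I_6 -> V) : {set V} :=
  [set a i | i : 'I_6] :|: [set b i | i : 'I_6].

Definition fence_attached (V : finType) (black red : rel V) (a b : 'I_6 -> V)
  (S : {set V}) : Prop :=
  [/\ S != set0, [disjoint S & fence_vertices a b],
      (forall i s, s \in S -> black (a i) s)
    & (forall i s, s \in S -> ~~ black (b i) s && ~~ red (b i) s)].

Definition meets_F (V : finType) (a b : 'I_6 -> V) (p : {set V} * {set V}) : bool :=
  (p.1 :&: fence_vertices a b != set0) && (p.2 :&: fence_vertices a b != set0).

Definition involves_AB (V : finType) (a b : 'I_6 -> V) (p : {set V} * {set V}) : bool :=
  [exists i, exists j, ((a i \in p.1) && (b j \in p.2)) || ((a i \in p.2) && (b j \in p.1))].

(* Main.v *)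
Require Import Defs.
From mathcomp Require Import all_boot.
Set Implicit Arguments. Unset Strict Implicit. Unset Printing Implicit Defensive.

Definition T := ('I_6 + 'I_6)%type.
Definition blackT (s t : T) : bool :=
  match s, t with
  | inl i, inl j => cyc6 i j | inr i, inr j => cyc6 i j
  | inl i, inr j => (i == 5 :> nat) && (j == 0 :> nat)
  | inr i, inl j => (j == 5 :> nat) && (i == 0 :> nat) end.
Definition redT (s t : T) : bool :=
  match s, t with
  | inl i, inr j => (i == j :> nat) || (j == i.+1 :> nat)
  | inr i, inl j => (j == i :> nat) || (i == j.+1 :> nat)
  | _, _ => false end.
Definition nonT s t := ~~ blackT s t && ~~ redT s t.
Definition diffT s t u := ~~ (blackT s u && blackT t u) && ~~ (nonT s u && nonT t u).
Definition same (s t : T) := match s, t with inl _, inl _ | inr _, inr _ => true | _, _ => false end.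
Definition ords : seq 'I_6 := [:: @Ordinal 6 0 isT; @Ordinal 6 1 isT; @Ordinal 6 2 isT; @Ordinal 6 3 isT; @Ordinal 6 4 isT; @Ordinal 6 5 isT].
Definition seqT : seq T := [seq inl i | i <- ords] ++ [seq inr i | i <- ords].
Lemma comp : all (fun s => all (fun t => (s != t) && same s t ==> (4 < count (fun u => [&& u != s, u != t & diffT s t u]) seqT)) seqT) seqT.
Proof. by vm_compute. Qed.
Lemma mem_ords (i : 'I_6) : i \in ords.
Proof. by case: i => [[|[|[|[|[|[|m]]]]]] Hm]. Qed.
Lemma mem_seqT (t : T) : t \in seqT.
Proof. by case: t => i; rewrite mem_cat; apply/orP; [left|right]; apply/mapP; exists i => //; apply: mem_ords. Qed.
Lemma uniq_seqT : uniq seqT. Proof. by vm_compute. Qed.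

Lemma disjointP (V : finType) (A B : {set V}) :
  reflect (forall x, x \in A -> x \in B -> False) [disjoint A & B].
Proof.
rewrite -setI_eq0; apply: (iffP eqP) => [H x xA xB | H].
  have : x \in A :&: B by rewrite inE xA.
  by rewrite H inE.
apply/setP => x; rewrite inE in_set0; apply/negP => /andP[]; exact: H.
Qed.

Definition Inv (V : finType) (black red : rel V) (FV : {set V}) (s : stage V) : Prop :=
 [/\ (forall P Q, P \in parts s -> Q \in parts s -> P != Q -> sblack s P Q ->
        forall p q, p \in P -> q \in Q -> black p q),
     (forall P Q, P \in parts s -> Q \in parts s -> P != Q -> snon s P Q ->
        forall p q, p \in P -> q \in Q -> ~~ black p q && ~~ red p q),
     (forall x, exists2 P, P \in parts s & x \in P),
     (forall P Q, P \in parts s -> Q \in parts s -> P != Q -> [disjoint P & Q])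
   & (forall P z1 z2, P \in parts s -> z1 \in FV -> z2 \in FV -> z1 \in P -> z2 \in P -> z1 = z2)].

Lemma in_parts_contract (V : finType) (s : stage V) u v x :
  (x \in parts (contract s u v)) = (x == u :|: v) || [&& x != v, x != u & x \in parts s].
Proof. by rewrite /= in_setU1 !in_setD1. Qed.

Lemma bool_aux (X Y : bool) : ~~ X && ~~ (~~ X && ~~ Y) -> Y.
Proof. by case: X; case: Y. Qed.

Lemma Inv_contract (V : finType) (black red : rel V) (FV : {set V}) (s : stage V) u v :
  symmetric black -> symmetric red -> Inv black red FV s ->
  u \in parts s -> v \in parts s -> u != v ->
  ~~ ((u :&: FV != set0) && (v :&: FV != set0)) -> Inv black red FV (contract s u v).
Proof.
move=> sb sr [J1 J2 J3 J4 J5] Hu Hv Huv Hm.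
have Hold : forall P, P \in parts (contract s u v) -> P != u :|: v ->
   [/\ P \in parts s, P != u & P != v].
  move=> P; rewrite in_parts_contract => /orP [/eqP->|/and3P[]]; first by rewrite eqxx.
  by move=> *; split.
have inw : forall x, (x \in u :|: v) = (x \in u) || (x \in v) by move=> x; rewrite in_setU.
split.
- move=> P Q HP HQ HPQ /=.
  case: (eqVneq P (u :|: v)) => [EP|NP].
  + have NQ : Q != u :|: v by rewrite -EP eq_sym.
    rewrite NQ /= => /andP[B1 B2] p q; rewrite EP inw => /orP[pu|pv] qQ;
    case: (Hold Q HQ NQ) => Q' Qu Qv.
    * by apply: (J1 u Q) => //; rewrite eq_sym.
    * by apply: (J1 v Q) => //; rewrite eq_sym.
  + case: (eqVneq Q (u :|: v)) => [EQ|NQ].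
    * move=> /andP[B1 B2] p q pP; rewrite EQ inw => /orP[qu|qv];
      case: (Hold P HP NP) => P' Pu Pv; rewrite sb.
      - by apply: (J1 u P) => //; rewrite eq_sym.
      - by apply: (J1 v P) => //; rewrite eq_sym.
    * case: (Hold P HP NP) => P' _ _; case: (Hold Q HQ NQ) => Q' _ _.
      exact: J1.
- move=> P Q HP HQ HPQ; rewrite /snon /=.
  case: (eqVneq P (u :|: v)) => [EP|NP].
  + have NQ : Q != u :|: v by rewrite -EP eq_sym.
    rewrite NQ /= => /bool_aux /andP[B1 B2] p q; rewrite EP inw => /orP[pu|pv] qQ;
    case: (Hold Q HQ NQ) => Q' Qu Qv.
    * by apply: (J2 u Q) => //; rewrite eq_sym.
    * by apply: (J2 v Q) => //; rewrite eq_sym.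
  + case: (eqVneq Q (u :|: v)) => [EQ|NQ].
    * move=> /bool_aux /andP[B1 B2] p q pP; rewrite EQ inw => /orP[qu|qv];
      case: (Hold P HP NP) => P' Pu Pv; rewrite sb sr.
      - by apply: (J2 u P) => //; rewrite eq_sym.
      - by apply: (J2 v P) => //; rewrite eq_sym.
    * case: (Hold P HP NP) => P' _ _; case: (Hold Q HQ NQ) => Q' _ _.
      exact: J2.
- move=> x; case: (J3 x) => P HP xP.
  case: (eqVneq P u) => [EP|Nu].
    by exists (u :|: v); rewrite ?in_parts_contract ?eqxx // inw -EP xP.
  case: (eqVneq P v) => [EP|Nv].
    by exists (u :|: v); rewrite ?in_parts_contract ?eqxx // inw -EP xP orbT.
  by exists P => //; rewrite in_parts_contract Nu Nv HP orbT.
- move=> P Q HP HQ HPQ.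
  case: (eqVneq P (u :|: v)) => [EP|NP].
  + have NQ : Q != u :|: v by rewrite -EP eq_sym.
    case: (Hold Q HQ NQ) => Q' Qu Qv.
    rewrite EP; apply/disjointP => x; rewrite inw => /orP[xu|xv] xQ.
    * by move/disjointP: (J4 u Q Hu Q' ltac:(by rewrite eq_sym)) => /(_ x xu xQ).
    * by move/disjointP: (J4 v Q Hv Q' ltac:(by rewrite eq_sym)) => /(_ x xv xQ).
  + case: (Hold P HP NP) => P' Pu Pv.
    case: (eqVneq Q (u :|: v)) => [EQ|NQ].
    * rewrite EQ; apply/disjointP => x xP; rewrite inw => /orP[xu|xv].
      - by move/disjointP: (J4 P u P' Hu Pu) => /(_ x xP xu).
      - by move/disjointP: (J4 P v P' Hv Pv) => /(_ x xP xv).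
    * case: (Hold Q HQ NQ) => Q' _ _; exact: J4.
- move=> P z1 z2 HP z1F z2F.
  case: (eqVneq P (u :|: v)) => [EP|NP].
  + have Hc : forall x y, x \in FV -> y \in FV -> x \in u -> y \in v -> False.
      move=> x y xF yF xu yv; move/negP: Hm; apply; apply/andP; split;
      apply/set0Pn; [exists x | exists y]; rewrite inE; apply/andP; split => //.
    rewrite EP !inw => /orP[z1u|z1v] /orP[z2u|z2v].
    * exact: (J5 u).
    * by case: (Hc _ _ z1F z2F z1u z2v).
    * by case: (Hc _ _ z2F z1F z2u z1v).
    * exact: (J5 v).
  + case: (Hold P HP NP) => P' _ _; exact: J5.
Qed.

Lemma valid_cat (V : finType) (s : stage V) l1 l2 :
  valid_seq s (l1 ++ l2) = valid_seq s l1 && valid_seq (run s l1) l2.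
Proof. by elim: l1 s => [|p l IH] s //=; rewrite IH !andbA. Qed.

Lemma Inv_init (V : finType) (black red : rel V) (FV : {set V}) :
  Inv black red FV (init_stage black red).
Proof.
split.
- move=> P Q _ _ _ /existsP[u /existsP[v /and3P[/eqP-> /eqP-> B]]] p q.
  by rewrite !in_set1 => /eqP-> /eqP->.
- move=> P Q /imsetP[x _ ->] /imsetP[y _ ->] _ /andP[nb nr] p q.
  rewrite !in_set1 => /eqP-> /eqP->.
  apply/andP; split; apply/negP => h; [move/negP: nb|move/negP: nr]; apply;
  apply/existsP; exists x; apply/existsP; exists y; by rewrite !eqxx h.
- by move=> x; exists [set x]; [apply: imset_f | rewrite set11].
- move=> P Q /imsetP[x _ ->] /imsetP[y _ ->] H.
  rewrite disjoints1 in_set1; apply/negP => /eqP E; move/negP: H; apply.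
  by rewrite E.
- by move=> P z1 z2 /imsetP[x _ ->] _ _; rewrite !in_set1 => /eqP-> /eqP->.
Qed.

Lemma Inv_run (V : finType) (black red : rel V) (a b : 'I_6 -> V) (s : stage V) l :
  symmetric black -> symmetric red ->
  Inv black red (fence_vertices a b) s -> valid_seq s l ->
  all (fun p => ~~ meets_F a b p) l -> Inv black red (fence_vertices a b) (run s l).
Proof.
move=> sb sr; elim: l s => [|p l IH] s //= Is /and4P[H1 H2 H12 Hv] /andP[Hm Ha].
apply: IH => //; exact: Inv_contract.
Qed.

Theorem lemma4p5 (V : finType) (black red : rel V) (a b : 'I_6 -> V) (S : {set V})
  (steps : seq ({set V} * {set V})) (k : nat) :
  trigraph_wf black red ->
  fence_gadget black red a b ->
  fence_attached black red a b S ->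
  valid_seq (init_stage black red) steps ->
  k < size steps ->
  meets_F a b (nth (set0, set0) steps k) ->
  (forall j, j < k -> ~~ meets_F a b (nth (set0, set0) steps j)) ->
  ~~ involves_AB a b (nth (set0, set0) steps k) ->
  let p := nth (set0, set0) steps k in
  5 <= red_degree (contract (run (init_stage black red) (take k steps)) p.1 p.2)
                  (p.1 :|: p.2).
Proof.
move=> [sb sr _ _ _] [[ai bi abne bla] [blb blab rdaa rdbb rdab]] _ val klt meet before notAB.
cbv zeta.
pose f (t : T) : V := match t with inl i => a i | inr i => b i end.
have fblack : forall s t, black (f s) (f t) = blackT s t.
  by case=> i; case=> j; rewrite /= ?bla ?blb ?blab // sb blab.
have fred : forall s t, red (f s) (f t) = redT s t.
  by case=> i; case=> j; rewrite /= ?rdaa ?rdbb ?rdab // sr rdab.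
have finj : injective f.
  case=> i; case=> j /= E.
  - by rewrite (ai _ _ E).
  - by move: (abne i j); rewrite E eqxx.
  - by move: (abne j i); rewrite E eqxx.
  - by rewrite (bi _ _ E).
set FV := fence_vertices a b.
have fF : forall t, f t \in FV.
  rewrite /FV /fence_vertices => t; rewrite in_setU; case: t => i /=; apply/orP.
  - by left; apply/imsetP; exists i.
  - by right; apply/imsetP; exists i.
have FVf : forall z, z \in FV -> exists t, z = f t.
  move=> z; rewrite /FV /fence_vertices in_setU => /orP[/imsetP[i _ ->]|/imsetP[i _ ->]].
  - by exists (inl i).
  - by exists (inr i).
set p := nth (set0, set0) steps k in meet notAB *.
set s := run (init_stage black red) (take k steps).
move: val; rewrite -(cat_take_drop k steps) valid_cat => /andP[v1 v2].
have Is : Inv black red FV s.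
  apply: Inv_run => //; first exact: Inv_init.
  apply/(all_nthP (set0, set0)) => j; rewrite size_take klt => jk.
  by rewrite nth_take //; exact: before.
rewrite (drop_nth (set0, set0) klt) -/p /= in v2.
case/and4P: v2 => H1 H2 H12 _.
case: Is => J1 J2 J3 J4 J5.
case/andP: meet => /set0Pn[x /setIP[x1 xF]] /set0Pn[y /setIP[y2 yF]].
case: (FVf x xF) => tx Ex; case: (FVf y yF) => ty Ey; subst x y.
have sm : same tx ty.
  move/negP: notAB; case: tx x1 xF => i x1 _; case: ty y2 yF => j y2 _ //= H.
  + exfalso; apply: H; apply/existsP; exists i; apply/existsP; exists j.
    by rewrite x1 y2.
  + exfalso; apply: H; apply/existsP; exists j; apply/existsP; exists i.
    by rewrite x1 y2 orbT.
have nxy : tx != ty.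
  apply/negP => /eqP E; subst ty.
  by move/disjointP: (J4 _ _ H1 H2 H12) => /(_ _ x1 y2).
have cnt := comp.
move/allP: cnt => /(_ tx (mem_seqT tx)) /allP /(_ ty (mem_seqT ty)).
rewrite nxy sm andbT implyTb -size_filter => cnt.
pose g (t : T) : {set V} := odflt set0 [pick P in parts s | f t \in P].
have gP : forall t, g t \in parts s /\ f t \in g t.
  move=> t; rewrite /g; case: pickP => [P /andP[]|H] //.
  exfalso; case: (J3 (f t)) => P HP fP; have := H P; rewrite HP fP.
  done.
have ginj : injective g.
  move=> t1 t2 E; apply: finj; case: (gP t1) => G1 f1; case: (gP t2) => _ f2.
  by rewrite -E in f2; apply: (J5 (g t1)) => //; apply: fF.
pose w := p.1 :|: p.2.
pose Dseq := [seq u <- seqT | [&& u != tx, u != ty & diffT tx ty u]].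
rewrite /red_degree cardE.
apply: (leq_trans cnt); rewrite -/Dseq -(size_map g).
apply: uniq_leq_size; first by rewrite map_inj_uniq // filter_uniq // uniq_seqT.
move=> P /mapP[t]; rewrite mem_filter => /andP[/and3P[ntx nty dt] _] ->.
rewrite mem_enum.
case: (gP t) => Ht ft.
have Hc : forall t', f t' \in g t -> t' = t.
  by move=> t' h; apply: finj; apply: (J5 (g t)).
have Pu : g t != p.1.
  by apply/negP => /eqP E; move/negP: ntx; apply; apply/eqP; apply: esym; apply: Hc; rewrite E.
have Pv : g t != p.2.
  by apply/negP => /eqP E; move/negP: nty; apply; apply/eqP; apply: esym; apply: Hc; rewrite E.
have Pw : g t != p.1 :|: p.2.
  apply/negP => /eqP E; move: ft; rewrite E in_setU => /orP[h|h].
  - by move/negP: ntx; apply; apply/eqP; apply: finj; apply: (J5 p.1).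
  - by move/negP: nty; apply; apply/eqP; apply: finj; apply: (J5 p.2).
rewrite inE in_parts_contract Pu Pv Ht orbT /= eqxx Pw /=.
case/andP: dt => d1 d2; apply/andP; split.
- apply/negP => /andP[b1 b2]; move/negP: d1; apply.
  rewrite -!fblack; apply/andP; split.
  + by apply: (J1 p.1 (g t)) => //; rewrite eq_sym.
  + by apply: (J1 p.2 (g t)) => //; rewrite eq_sym.
- apply/negP => /andP[b1 b2]; move/negP: d2; apply.
  rewrite /nonT -!fblack -!fred; apply/andP; split.
  + by apply: (J2 p.1 (g t)) => //; rewrite eq_sym.
  + by apply: (J2 p.2 (g t)) => //; rewrite eq_sym.
Qed.
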